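(* Let $\nu,k$ be integers with $2\nu-1\ge k\ge\nu-1\ge1$. Then $N(2\nu,k)=2$ if $k\equiv2\nu+1\pmod3$, and $N(2\nu,k)=0$ otherwise.
   Context: For $n>k\ge1$, $N(n,k)$ is the nullity of the $n\times n$ skew-symmetric Toeplitz matrix $A(n,k)$ whose first $k$ superdiagonals have all entries $1$ and whose remaining superdiagonals have all entries $0$. *)

(* Defs.v *)
From mathcomp Require Import all_boot all_algebra.
Set Implicit Arguments. Unset Strict Implicit. Unset Printing Implicit Defensive.
Import GRing.Theory.
Local Open Scope ring_scope.

Definition Amx (n k : nat) : 'M[rat]_n :=
  \matrix_(i < n, j < n)
    (if ((i < j)%N && (j <= i + k)%N) then 1
     else if ((j < i)%N && (i <= j + k)%N) then -1 else 0).

Definition Nnull (n k : nat) : nat := (n - \rank (Amx n k))%N.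

(* Main.v *)
Require Import Defs.
From mathcomp Require Import all_boot all_algebra.
From mathcomp Require Import zify lra.
Import GRing.Theory Num.Theory.
Local Open Scope ring_scope.

Definition pre n (x : 'I_n -> rat) (j : nat) : rat := \sum_(i < n | (i < j)%N) x i.
Arguments pre {n}.

Lemma pre0 n (x : 'I_n -> rat) : pre x 0 = 0.
Proof. by rewrite /pre big_pred0. Qed.

Lemma preN n (x : 'I_n -> rat) j : (n <= j)%N -> pre x j = pre x n.
Proof.
move=> h; rewrite /pre; apply: eq_bigl => i.
by rewrite (ltn_ord i) (leq_trans (ltn_ord i) h).
Qed.

Lemma preS n (x : 'I_n -> rat) j (hj : (j < n)%N) :
  pre x j.+1 = pre x j + x (Ordinal hj).
Proof.
rewrite /pre (bigD1 (Ordinal hj)) /=; last by [].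
rewrite addrC; congr (_ + _); apply: eq_bigl => i.
by rewrite ltnS -val_eqE /= ltn_neqAle andbC.
Qed.

Lemma pre_int n (x : 'I_n -> rat) a b : (a <= b)%N ->
  \sum_(i < n | (i < b)%N && ~~ (i < a)%N) x i = pre x b - pre x a.
Proof.
move=> hab; rewrite /pre (bigID (fun i : 'I_n => (i < a)%N) (fun i : 'I_n => (i < b)%N)) /=.
have -> : \sum_(i < n | (i < b)%N && (i < a)%N) x i = \sum_(i < n | (i < a)%N) x i.
  apply: eq_bigl => i; apply/idP/idP; first by case/andP.
  by move=> h; rewrite h (leq_trans h hab).
by rewrite addrC addrK.
Qed.

Lemma colA n k (x : 'I_n -> rat) (j : 'I_n) :
  \sum_i x i * Amx n k i j =
  (pre x j - pre x (j - k)%N) - (pre x (j + k)%N.+1 - pre x j.+1).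
Proof.
rewrite -pre_int; last by lia.
rewrite -pre_int; last by lia.
rewrite [X in _ = X - _]big_mkcond [X in _ = _ - X]big_mkcond -sumrB.
apply: eq_bigr => i _; rewrite mxE.
have e1 : ((i < j)%N && (j <= i + k)%N) = ((i < j)%N && ~~ (i < j - k)%N).
  by apply/idP/idP; case/andP=> *; apply/andP; split=> //; lia.
have e2 : ((j < i)%N && (i <= j + k)%N) = ((i < (j + k).+1)%N && ~~ (i < j.+1)%N).
  by apply/idP/idP; case/andP=> *; apply/andP; split=> //; lia.
rewrite e1 e2.
case h1: (_ && _); case h2: (_ && _) => //=.
- by move: h1 h2 => /andP[? _] /andP[_ ]; rewrite -leqNgt; lia.
- by rewrite mulr1 subr0.
- by rewrite mulrN1 sub0r.
- by rewrite mulr0 subr0.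
Qed.
Definition P3 (a T : rat) (j : nat) : rat :=
  if (j %% 3 == 0)%N then 0 else if (j %% 3 == 1)%N then a else T - a.

Lemma P3S (a T : rat) j : P3 a T j + P3 a T j.+1 + P3 a T j.+2 = T.
Proof.
rewrite /P3.
have [h|[h|h]] : ((j %% 3 = 0 /\ j.+1 %% 3 = 1 /\ j.+2 %% 3 = 2) \/
   (j %% 3 = 1 /\ j.+1 %% 3 = 2 /\ j.+2 %% 3 = 0) \/
   (j %% 3 = 2 /\ j.+1 %% 3 = 0 /\ j.+2 %% 3 = 1))%N.
  lia.
all: case: h => -> [-> ->] /=; lra.
Qed.

Lemma Szero (nu k n : nat) (S : nat -> rat) :
  n = (2 * nu)%N ->
  (1 <= nu)%N -> (nu <= k.+1)%N -> (k < n)%N ->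
  S 0%N = 0 -> (forall j, (n <= j)%N -> S j = S n) ->
  (forall i, (i < n)%N -> S i + S i.+1 = S (i+k).+1 + S (i-k)%N) ->
  ((k %% 3 == (n+1) %% 3)%N -> S 1%N = 0 /\ S n = 0) ->
  forall j, (j <= n)%N -> S j = 0.
Proof.
move=> hn hnu hk hkn hS0 hST hE hres.
set T := S n.
have C : forall i, (n-k-1 <= i)%N -> (i <= k)%N -> S i + S i.+1 = T.
  move=> i h1 h2; have := hE i ltac:(lia).
  rewrite (hST (i+k).+1); last by lia.
  have -> : (i - k = 0)%N by lia.
  by rewrite hS0 addr0.
have D : S k.+1 = S 1%N.
  have := hE 0%N ltac:(lia); rewrite add0n sub0n hS0 add0r addr0 => ->.
  done.
have Mid : forall t, (n-k-1+t <= k.+1)%N ->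
    S (n-k-1+t)%N = if odd t then T - S (n-k-1)%N else S (n-k-1)%N.
  elim=> [|t IH] h; first by rewrite addn0.
  rewrite addnS /=.
  have := C (n-k-1+t)%N ltac:(lia) ltac:(lia).
  rewrite IH; last by lia.
  case: (odd t) => /= H; lra.
have Smk : S (n-k-1)%N = S 1%N.
  have := Mid (k.+1 - (n-k-1))%N ltac:(lia).
  have -> : (n - k - 1 + (k.+1 - (n - k - 1)) = k.+1)%N by lia.
  have -> : (k.+1 - (n - k - 1) = 2 * (k.+1 - nu))%N by lia.
  by rewrite oddM /= D.
have [hm0|hm1] : (k.+1 = n \/ k.+2 <= n)%N by lia.
  have hm0' : (n - k - 1 = 0)%N by lia.
  have hS1 : S 1%N = 0 by rewrite -Smk hm0'.
  have hT : T = 0 by rewrite /T -hm0 D.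
  move=> j hj; have := Mid j; rewrite hm0'.
  rewrite add0n hS0 hT subr0 => ->; last by lia.
  by case: (odd j).
have A1 : forall j, (1 <= j)%N -> (j+k+2 <= n)%N -> S j.-1 + S j + S j.+1 = T.
  move=> j h1 h2.
  have E1 := hE j.-1 ltac:(lia).
  have E2 := hE j ltac:(lia).
  have E3 := hE (j+k)%N ltac:(lia).
  move: E1 E2 E3.
  have -> : (j.-1 + k).+1 = (j + k)%N by lia.
  have -> : (j.-1 - k = 0)%N by lia.
  have -> : (j - k = 0)%N by lia.
  have -> : (j + k - k = j)%N by lia.
  have -> : (j.-1).+1 = j by lia.
  rewrite (hST (j + k + k).+1); last by lia.
  rewrite -/T hS0 !addr0 => E1 E2 E3.
  lra.
have B : S (n-k-2)%N = 0.
  have E1 := hE (n-k-2)%N ltac:(lia).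
  have E2 := hE (n-1)%N ltac:(lia).
  move: E1 E2.
  have -> : (n - k - 2 + k).+1 = (n-1)%N by lia.
  have -> : (n - k - 2 - k = 0)%N by lia.
  have -> : (n - k - 2).+1 = (n-k-1)%N by lia.
  have -> : (n - 1).+1 = n by lia.
  have -> : (n - 1 - k = n-k-1)%N by lia.
  rewrite (hST (n - 1 + k).+1); last by lia.
  rewrite -/T hS0 addr0 => E1 E2; lra.
set a := S 1%N.
have Per : forall j, (j.+1 <= n-k-1)%N -> S j = P3 a T j /\ S j.+1 = P3 a T j.+1.
  elim=> [|j IH] h; first by rewrite hS0 /P3 /=.
  have [IH1 IH2] := IH ltac:(lia).
  split=> //.
  have := A1 j.+1 ltac:(lia) ltac:(lia).
  rewrite /= IH1 IH2 => H.
  have := P3S a T j; lra.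
have [pa pb] := Per (n-k-2)%N ltac:(lia).
have e : (n-k-2).+1 = (n-k-1)%N by lia.
rewrite e in pb.
have [ha hT] : a = 0 /\ T = 0.
  have [r0|[r1|r2]] : ((n-k-2) %% 3 = 0 \/ (n-k-2) %% 3 = 1 \/ (n-k-2) %% 3 = 2)%N by lia.
  - apply: hres; apply/eqP; lia.
  - move: pa pb; rewrite /P3 r1 /=.
    have -> : ((n-k-1) %% 3 = 2)%N by lia.
    rewrite /= B Smk -/a => H1 H2; split; lra.
  - move: pa pb; rewrite /P3 r2 /=.
    have -> : ((n-k-1) %% 3 = 0)%N by lia.
    rewrite /= B Smk -/a => H1 H2; split; lra.
have P0 : forall j, P3 a T j = 0.
  by move=> j; rewrite /P3 ha hT subr0; case: ifP => // _; case: ifP.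
have low : forall j, (j <= n-k-1)%N -> S j = 0.
  move=> j hj; case: j hj => [|j] hj; first by [].
  by have [_ ->] := Per j hj.
move=> j hj.
have [h1|[h2|h3]] : (j <= n-k-1 \/ (n-k-1 <= j <= k.+1) \/ k.+2 <= j)%N by lia.
- exact: low.
- have := Mid (j - (n-k-1))%N ltac:(lia).
  have -> : (n - k - 1 + (j - (n - k - 1)) = j)%N by lia.
  by rewrite Smk -/a ha hT sub0r oppr0; case: ifP.
- have E1 := hE (j-1)%N ltac:(lia).
  have E2 := hE (j-k-2)%N ltac:(lia).
  move: E1 E2.
  rewrite (hST (j - 1 + k).+1); last by lia.
  have -> : (j - k - 2 + k).+1 = (j - 1)%N by lia.
  have -> : (j - 1).+1 = j by lia.
  have -> : (j - k - 2 - k = 0)%N by lia.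
  have -> : (j - 1 - k = (j-k-2).+1)%N by lia.
  rewrite hS0 addr0 -/T hT (low (j-k-2)%N); last by lia.
  rewrite (low (j-k-2).+1); last by lia.
  move=> E1 E2; lra.
Qed.
Definition Sc (n k : nat) (a T : rat) (j : nat) : rat :=
  if (j <= n-k-1)%N then P3 a T j
  else if (j <= k.+1)%N then (if odd (j - (n-k-1)) then T - a else a)
  else T - P3 a T (j - k.+2).

Definition Sx n k a T j := Sc n k a T (minn j n).

Lemma Sx_props (nu k n : nat) (a T : rat) :
  n = (2 * nu)%N -> (1 <= nu)%N -> (nu <= k.+1)%N -> (k.+2 <= n)%N ->
  ((n-k-2) %% 3 = 0)%N ->
  [/\ Sx n k a T 0 = 0, Sx n k a T 1 = a, Sx n k a T n = T &
   forall i, (i < n)%N -> Sx n k a T i + Sx n k a T i.+1 =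
      Sx n k a T (i+k).+1 + Sx n k a T (i-k)].
Proof.
move=> hn hnu hk hkn hr.
have Pm : P3 a T (n-k-1) = a.
  by rewrite /P3; have -> : ((n-k-1) %% 3 = 1)%N by lia.
have Pm1 : P3 a T (n-k-2) = 0.
  by rewrite /P3 hr.
have Slow : forall j, (j <= n-k-1)%N -> Sc n k a T j = P3 a T j.
  by move=> j hj; rewrite /Sc hj.
have Smid : forall j, (n-k-1 <= j <= k.+1)%N ->
    Sc n k a T j = if odd (j - (n-k-1)) then T - a else a.
  move=> j /andP[h1 h2]; rewrite /Sc.
  case: ifP => h3.
    have -> : j = (n-k-1)%N by lia.
    by rewrite subnn /= Pm.
  by rewrite h2.
have Sup : forall t, (k.+2 + t <= n)%N -> Sc n k a T (k.+2 + t) = T - P3 a T t.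
  move=> t ht; rewrite /Sc.
  have -> : (k.+2 + t <= n - k - 1)%N = false by lia.
  have -> : (k.+2 + t <= k.+1)%N = false by lia.
  by rewrite addKn.
have Sn : Sc n k a T n = T.
  have := Sup (n - k.+2)%N ltac:(lia).
  have -> : (k.+2 + (n - k.+2))%N = n by lia.
  have -> : (n - k.+2 = n - k - 2)%N by lia.
  by rewrite Pm1 subr0.
have Sxe : forall j, (j <= n)%N -> Sx n k a T j = Sc n k a T j.
  by move=> j hj; rewrite /Sx; have -> : minn j n = j by lia.
have Sxn : forall j, (n <= j)%N -> Sx n k a T j = T.
  by move=> j hj; rewrite /Sx; have -> : minn j n = n by lia.
split.
- by rewrite Sxe ?Slow //; lia.
- by rewrite Sxe ?Slow //; lia.
- by rewrite Sxe.
move=> i hi.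
have [c1|[c2|c3]] : (i.+1 <= n-k-1 \/ (n-k-1 <= i <= k) \/ k.+1 <= i)%N by lia.
- have -> : (i - k = 0)%N by lia.
  rewrite (Sxe (i+k)%N.+1); last by lia.
  rewrite (Sxe i); last by lia.
  rewrite (Sxe i.+1); last by lia.
  rewrite (Sxe 0); last by lia.
  rewrite (Slow i); last by lia.
  rewrite (Slow i.+1); last by lia.
  rewrite (Slow 0); last by lia.
  rewrite {3}/P3 /= addr0.
  case: i c1 hi => [|i] c1 hi.
    rewrite Smid; last by lia.
    have -> : (k.+1 - (n-k-1) = 2 * (k.+1 - nu))%N by lia.
    by rewrite oddM /= /P3 /= add0r.
  have -> : (i.+1 + k).+1 = (k.+2 + i)%N by lia.
  rewrite Sup; last by lia.
  have := P3S a T i; lra.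
- have -> : (i - k = 0)%N by lia.
  rewrite (Sxn (i+k)%N.+1); last by lia.
  rewrite (Sxe i); last by lia.
  rewrite (Sxe i.+1); last by lia.
  rewrite (Sxe 0); last by lia.
  rewrite (Smid i); last by lia.
  rewrite (Smid i.+1); last by lia.
  rewrite (Slow 0); last by lia.
  rewrite /P3 /= subSn; last by lia.
  rewrite /=; case: (odd _) => /=; lra.
- rewrite (Sxn (i+k)%N.+1); last by lia.
  rewrite (Sxe i); last by lia.
  rewrite (Sxe i.+1); last by lia.
  rewrite (Sxe (i-k)%N); last by lia.
  have [t et] : exists t, i = (k.+1 + t)%N by exists (i - k.+1)%N; lia.
  rewrite et in hi c3 *.
  have -> : (k.+1 + t).+1 = (k.+2 + t)%N by lia.
  rewrite Sup; last by lia.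
  have -> : (k.+1 + t - k = t.+1)%N by lia.
  rewrite (Slow t.+1); last by lia.
  case: t et hi c3 => [|t] et hi c3.
    rewrite addn0 Smid; last by lia.
    have -> : (k.+1 - (n-k-1) = 2 * (k.+1 - nu))%N by lia.
    rewrite oddM /= /P3 /=; lra.
  have -> : (k.+1 + t.+1 = k.+2 + t)%N by lia.
  rewrite Sup; last by lia.
  have := P3S a T t; lra.
Qed.

Lemma ker_row (nu k n : nat) (u : 'rV[rat]_n) :
  n = (2 * nu)%N -> (1 <= nu)%N -> (nu <= k.+1)%N -> (k < n)%N ->
  u *m Amx n k = 0 ->
  ((k %% 3 == (n+1) %% 3)%N -> pre (u 0) 1 = 0 /\ pre (u 0) n = 0) ->
  u = 0.
Proof.
move=> hn hnu hk hkn hu hres.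
have hE : forall i, (i < n)%N -> pre (u 0) i + pre (u 0) i.+1 = pre (u 0) (i + k).+1 + pre (u 0) (i - k)%N.
  move=> i hi.
  have := congr1 (fun M : 'rV_n => M 0 (Ordinal hi)) hu.
  rewrite /= !mxE colA /= => h; lra.
have hz := @Szero nu k n (pre (u 0)) hn hnu hk hkn (@pre0 _ (u 0)) (@preN _ (u 0)) hE hres.
apply/rowP => i; rewrite [RHS]mxE.
have := @preS _ (u 0) i (ltn_ord i).
rewrite (hz i.+1) ?(hz i) //; last by apply: ltnW.
have -> : Ordinal (ltn_ord i) = i by apply: val_inj.
rewrite add0r => <-.
by [].
Qed.

Lemma pre_Sx n k a T (x : 'I_n -> rat) :
  (forall i : 'I_n, x i = Sc n k a T i.+1 - Sc n k a T i) ->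
  forall j, pre x j = Sx n k a T j.
Proof.
move=> hx.
have h0 : Sc n k a T 0 = 0 by rewrite /Sc /P3 /=.
have H : forall j, (j <= n)%N -> pre x j = Sc n k a T j.
  elim=> [|j IH] hj; first by rewrite pre0 h0.
  rewrite (@preS _ x j hj) IH ?hx /=; [lra | exact: ltnW].
move=> j; rewrite /Sx; case: (leqP j n) => hj.
  by rewrite H //; have -> : minn j n = j by lia.
rewrite preN ?H //; last exact: ltnW.
Qed.

Lemma mainL (nu k n : nat) :
  n = (2 * nu)%N -> (1 <= nu - 1)%N -> (nu - 1 <= k)%N -> (k <= 2 * nu - 1)%N ->
  \rank (kermx (Amx n k)) = (if k == (n + 1) %[mod 3] then 2 else 0)%N.
Proof.
move=> hn h1 h2 h3.
have hnu : (1 <= nu)%N by lia.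
have hk : (nu <= k.+1)%N by lia.
have hkn : (k < n)%N by lia.
set A := Amx n k; set K := kermx A.
have rowK : forall m (M : 'M_(m, n)), (M <= K)%MS -> forall r, row r M *m A = 0.
  by move=> m M; rewrite sub_kermx => /eqP h r; rewrite -row_mul h row0.
case: ifP => hres; last first.
  apply/eqP; rewrite mxrank_eq0 -submx0; apply/row_subP => r; rewrite submx0; apply/eqP.
  apply: (@ker_row nu k n) => //; first exact: rowK.
  by rewrite hres.
have hk2 : (k.+2 <= n)%N.
  move/eqP: hres => hres; lia.
pose L : 'M[rat]_(n, 2) :=
  \matrix_(i < n, c < 2) (if (c : nat) == 0%N then ((i < 1)%N)%:R else ((i < n)%N)%:R).
have mulL : forall m (M : 'M_(m, n)) r (c : 'I_2),
    (M *m L) r c = pre (M r) (if (c : nat) == 0%N then 1%N else n).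
  move=> m M r c; rewrite mxE /pre; case: ifP => hc; rewrite [RHS]big_mkcond;
  apply: eq_bigr => i _; rewrite mxE hc; by case: (_ < _)%N; rewrite ?mulr1 ?mulr0.
apply/eqP; rewrite eqn_leq; apply/andP; split.
  rewrite -(mxrank_mul_ker K L).
  have -> : \rank (K :&: kermx L) = 0%N.
    apply/eqP; rewrite mxrank_eq0 -submx0; apply/row_subP => r; rewrite submx0; apply/eqP.
    have hM : (K :&: kermx L <= K)%MS by exact: capmxSl.
    have hL : (row r (K :&: kermx L) <= kermx L)%MS.
      exact: submx_trans (row_sub r _) (capmxSr _ _).
    move: hL; rewrite sub_kermx => /eqP hL.
    apply: (@ker_row nu k n) => //; first exact: rowK.
    move=> _; split.
      by have := congr1 (fun M : 'M[rat]_(1,2) => M 0 (@ord0 1)) hL; rewrite /= mulL /= mxE.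
    by have := congr1 (fun M : 'M[rat]_(1,2) => M 0 (@ord_max 1)) hL; rewrite /= mulL /= mxE.
  by rewrite addn0; exact: rank_leq_col.
have hr : ((n - k - 2) %% 3 = 0)%N by move/eqP: hres => hres; lia.
pose V : 'M[rat]_(2, n) := \matrix_(r < 2, i < n)
   (Sc n k ((r : nat) == 0%N)%:R ((r : nat) == 1%N)%:R i.+1 -
    Sc n k ((r : nat) == 0%N)%:R ((r : nat) == 1%N)%:R i).
have preV : forall r j, pre (V r) j =
    Sx n k ((r : nat) == 0%N)%:R ((r : nat) == 1%N)%:R j.
  by move=> r j; apply: pre_Sx => i; rewrite mxE.
have VK : (V <= K)%MS.
  rewrite sub_kermx; apply/eqP/matrixP => r j; rewrite !mxE colA !preV.
  have [_ _ _ hE] := @Sx_props nu k n ((r : nat) == 0%N)%:R ((r : nat) == 1%N)%:R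
    hn hnu hk hk2 hr.
  have := hE j (ltn_ord j); lra.
have VL : V *m L = 1%:M.
  apply/matrixP => r c; rewrite mulL preV.
  have [_ e1 en _] := @Sx_props nu k n ((r : nat) == 0%N)%:R ((r : nat) == 1%N)%:R
    hn hnu hk hk2 hr.
  rewrite mxE.
  move: e1 en; case: r => [[|[|r]] hr1] //; case: c => [[|[|c]] hc1] //= e1 en; by rewrite ?e1 ?en.
have := mxrankS VK; have := mxrankM_maxl V L; rewrite VL mxrank1; lia.
Qed.

Local Close Scope ring_scope.

Theorem lemma9p1 (nu k : nat) :
  (1 <= nu - 1)%N -> (nu - 1 <= k)%N -> (k <= 2 * nu - 1)%N ->
  Nnull (2 * nu) k = (if k == (2 * nu + 1) %[mod 3] then 2 else 0)%N.
Proof.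
move=> h1 h2 h3; rewrite /Nnull -mxrank_ker.
exact: (@mainL nu k (2 * nu)%N).
Qed.
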